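(* Let $p$ be a prime and let $\mathrm{Circ}(a_0,\ldots,a_{p-1})$ be a Hermitian circulant with universal perfect state transfer. Then $a_j\neq 0$ for $j=1,\ldots,p-1$.
   Context: $\mathrm{Circ}(a_0,\ldots,a_{n-1})$ denotes the $n\times n$ matrix $C$ with $C_{j,k}=a_{k-j}$ (indices mod $n$). A graph with Hermitian adjacency matrix $A$ has universal perfect state transfer if for every pair of vertices $v,w$ there is $t>0$ with $|\langle w|e^{-\mathtt{i} At}|v\rangle|=1$. *)

(* Defs.v *)
From HB Require Import structures.
From mathcomp Require Import all_boot all_order all_algebra.
From mathcomp Require Import all_classical all_reals.
From mathcomp Require Import topology normedtype sequences.
From mathcomp Require Import complex.

Set Implicit Arguments.
Unset Strict Implicit.
Unset Printing Implicit Defensive.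

Import Order.TTheory GRing.Theory Num.Theory.
Import numFieldNormedType.Exports.
Local Open Scope ring_scope.
Local Open Scope complex_scope.

Lemma circ_idx_lt (n : nat) (j k : 'I_n) : ((k + n - j) %% n < n)%N.
Proof. by rewrite ltn_pmod // (leq_ltn_trans (leq0n k) (ltn_ord k)). Qed.

Definition circ_idx (n : nat) (j k : 'I_n) : 'I_n := Ordinal (circ_idx_lt j k).

Definition circ (R : realType) (n : nat) (a : 'I_n -> R[i]) : 'M[R[i]]_n :=
  \matrix_(j < n, k < n) a (circ_idx j k).

Definition hermitian_mx (R : realType) (n : nat) (A : 'M[R[i]]_n) : Prop :=
  forall j k : 'I_n, A k j = (A j k)^*.

Definition expm_partial (R : realType) (n : nat) (A : 'M[R[i]]_n) (t : R)
    (N : nat) : 'M[R[i]]_n :=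
  \sum_(m < N) (((- 'i * t%:C) ^+ m / (m`!)%:R) *: A ^+ m).

Definition expm_iAt (R : realType) (n : nat) (A : 'M[R[i]]_n) (t : R)
    : 'M[R[i]]_n :=
  \matrix_(j < n, k < n)
    ((limn (fun N => complex.Re (expm_partial A t N j k)))
       +i* (limn (fun N => complex.Im (expm_partial A t N j k)))).

Definition pst (R : realType) (n : nat) (A : 'M[R[i]]_n) (v w : 'I_n) : Prop :=
  exists t : R, 0 < t /\ `| expm_iAt A t w v | = 1.

Definition universal_pst (R : realType) (n : nat) (A : 'M[R[i]]_n) : Prop :=
  forall v w : 'I_n, pst A v w.

(* Main.v *)
Require Import Defs.
From HB Require Import structures.
From mathcomp Require Import all_boot all_order all_algebra.
From mathcomp Require Import all_classical all_reals.
From mathcomp Require Import topology normedtype sequences.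
From mathcomp Require Import complex.
From mathcomp Require Import trigo.
From mathcomp Require Import all_field.
From mathcomp Require Import ring lra zify.
Set Implicit Arguments.
Unset Strict Implicit.
Unset Printing Implicit Defensive.
Import Order.TTheory GRing.Theory Num.Theory.
Import numFieldNormedType.Exports.
Local Open Scope classical_set_scope.
Local Open Scope ring_scope.
Local Open Scope complex_scope.
Section Trig.
Variable R : realType.
Implicit Types x y : R.

Definition cis x : R[i] := cos x +i* sin x.

Lemma cisD x y : cis (x + y) = cis x * cis y.
Proof. rewrite /cis cosD sinD /=. congr Complex; ring. Qed.

Lemma cis0 : cis 0 = 1.
Proof. by rewrite /cis cos0 sin0. Qed.

Lemma cisX x k : cis x ^+ k = cis (x *+ k).
Proof. elim: k => [|k IH]; first by rewrite expr0 mulr0n cis0.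
by rewrite exprS IH mulrS cisD. Qed.

Lemma normcis x : `|cis x| = 1.
Proof. by rewrite normc_def /cis /= cos2Dsin2 sqrtr1. Qed.

Lemma cos_per (m : int) y : cos (y + pi *+ 2 * m%:~R) = cos y.
Proof.
case: m => n.
  by rewrite mulr_natr (periodicn (@cosD2pi R)).
rewrite NegzE mulrN -[in RHS](subrK (pi *+ 2 * (n.+1)%:~R) y).
by rewrite mulr_natr (periodicn (@cosD2pi R)).
Qed.

Lemma sin_per (m : int) y : sin (y + pi *+ 2 * m%:~R) = sin y.
Proof.
case: m => n.
  by rewrite mulr_natr (periodicn (@sinD2pi R)).
rewrite NegzE mulrN -[in RHS](subrK (pi *+ 2 * (n.+1)%:~R) y).
by rewrite mulr_natr (periodicn (@sinD2pi R)).
Qed.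

Lemma cis_eq1 x : cis x = 1 -> exists z : int, x = pi *+ 2 * z%:~R.
Proof.
case=> c1 s0.
have T0 : 0 < pi *+ 2 :> R by rewrite pmulrn_rgt0 // pi_gt0.
set T := pi *+ 2 in T0 *.
exists (Num.floor (x / T)).
set m := Num.floor (x / T).
have /andP[h1 h2] := floor_itv (x / T).
rewrite -/m in h1 h2.
set r := x - T * m%:~R.
have r0 : 0 <= r.
  by rewrite subr_ge0 mulrC -ler_pdivlMr.
have rT : r < T.
  move: h2; rewrite ltr_pdivrMr // rmorphD /= rmorph1 mulrDl mul1r => h2.
  rewrite /r; lra.
have cr : cos r = 1.
  by rewrite -(cos_per m) subrK.
have sr : sin r = 0.
  by rewrite -(sin_per m) subrK.
suff : r = 0 by move/eqP; rewrite subr_eq0 => /eqP.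
apply/eqP; rewrite eq_le r0 andbT; apply/negP => /negP; rewrite -ltNge => rpos.
have [rpi|pir] := ltP r pi.
  by have := sin_gt0_pi (x:=r); rewrite rpos rpi sr ltxx => /(_ isT).
move: pir; rewrite le_eqVlt => /orP[/eqP pir|pir].
  move: cr; rewrite -pir cospi => h; exfalso; lra.
have := sin_gt0_pi (x:= r - pi).
rewrite subr_gt0 pir /= ltrBlDr.
have -> : pi + pi = T by rewrite /T mulr2n.
rewrite rT => /(_ isT).
have : sin (r - pi + pi) = - sin (r - pi) by apply: sinDpi.
by rewrite subrK sr => /eqP; rewrite eq_sym oppr_eq0 => /eqP ->; rewrite ltxx.
Qed.

End Trig.
Section Series.
Variable R : realType.
Implicit Types x y : R.

Lemma mi_even q : (-'i : R[i]) ^+ q.*2 = ((-1) ^+ q)%:C.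
Proof.
by rewrite -mul2n exprM sqrrN sqr_i rmorphXn /= rmorphN1.
Qed.

Lemma expterm y m :
  (-'i * y%:C) ^+ m / (m`!)%:R = cos_coeff y m +i* (- sin_coeff y m).
Proof.
rewrite /cos_coeff /sin_coeff /=.
rewrite exprMn -(rmorph_nat (real_complex R)) -fmorphV -rmorphXn.
have [[q ->]|[q ->]] : (exists q, m = q.*2) \/ (exists q, m = q.*2.+1).
- rewrite -[m](odd_double_half m); case: (odd m); [right|left]; by exists m./2.
- rewrite mi_even odd_double doubleK /= !mul0r !mul1r -!rmorphM /=.
  by rewrite -exprnP oppr0.
rewrite exprS mi_even /= odd_double /= doubleK !mul0r !mul1r.
rewrite -!mulrA -!rmorphM /=.
apply/eqP; rewrite eq_complex /=.
by rewrite oppr0 !(mul0r, mulr0) subr0 add0r mulN1r !eqxx.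
Qed.
End Series.
Section Lim.
Variable R : realType.
Implicit Types x y : R.

Lemma ReD (x y : R[i]) : complex.Re (x + y) = complex.Re x + complex.Re y. Proof. by case: x; case: y. Qed.
Lemma ImD (x y : R[i]) : complex.Im (x + y) = complex.Im x + complex.Im y. Proof. by case: x; case: y. Qed.
Lemma Re0 : complex.Re (0 : R[i]) = 0. Proof. by []. Qed.
Lemma Im0 : complex.Im (0 : R[i]) = 0. Proof. by []. Qed.
Lemma ReM_ (c : R[i]) (a b : R) : complex.Re (c * (a +i* b)) = complex.Re c * a - complex.Im c * b.
Proof. by case: c. Qed.
Lemma ImM_ (c : R[i]) (a b : R) : complex.Im (c * (a +i* b)) = complex.Re c * b + complex.Im c * a.
Proof. by case: c. Qed.

Lemma Re_sum (I : Type) (r : seq I) (P : pred I) (F : I -> R[i]) :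
  complex.Re (\sum_(i <- r | P i) F i) = \sum_(i <- r | P i) complex.Re (F i).
Proof. exact: (big_morph _ ReD Re0). Qed.
Lemma Im_sum (I : Type) (r : seq I) (P : pred I) (F : I -> R[i]) :
  complex.Im (\sum_(i <- r | P i) F i) = \sum_(i <- r | P i) complex.Im (F i).
Proof. exact: (big_morph _ ImD Im0). Qed.

Lemma cvg_sumR (I : finType) (f : I -> nat -> R) (l : I -> R) :
  (forall k, f k @ \oo --> l k) ->
  (fun N => \sum_k f k N) @ \oo --> \sum_k l k.
Proof.
move=> h; elim: (index_enum I) => [|k r IH].
  rewrite big_nil; under eq_cvg do rewrite big_nil; exact: cvg_cst.
rewrite big_cons; under eq_cvg do rewrite big_cons.
exact: (cvgD (h k) IH).
Qed.

Lemma lim_cplx (I : finType) (c : I -> R[i]) (u v : I -> nat -> R) (U V : I -> R) :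
  (forall k, u k @ \oo --> U k) -> (forall k, v k @ \oo --> V k) ->
  limn (fun N => complex.Re (\sum_k c k * (u k N +i* v k N))) +i*
  limn (fun N => complex.Im (\sum_k c k * (u k N +i* v k N)))
  = \sum_k c k * (U k +i* V k).
Proof.
move=> hu hv.
have hRe : (fun N => complex.Re (\sum_k c k * (u k N +i* v k N))) @ \oo -->
   \sum_k (complex.Re (c k) * U k - complex.Im (c k) * V k).
  have -> : (fun N => complex.Re (\sum_k c k * (u k N +i* v k N))) =
     (fun N => \sum_k (complex.Re (c k) * u k N - complex.Im (c k) * v k N)).
    by apply/funext => N; rewrite Re_sum; apply: eq_bigr => k _; rewrite ReM_.
  apply: cvg_sumR => k; apply: cvgB; [exact: cvgMl_tmp | exact: cvgMl_tmp].
have hIm : (fun N => complex.Im (\sum_k c k * (u k N +i* v k N))) @ \oo -->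
   \sum_k (complex.Re (c k) * V k + complex.Im (c k) * U k).
  have -> : (fun N => complex.Im (\sum_k c k * (u k N +i* v k N))) =
     (fun N => \sum_k (complex.Re (c k) * v k N + complex.Im (c k) * u k N)).
    by apply/funext => N; rewrite Im_sum; apply: eq_bigr => k _; rewrite ImM_.
  apply: cvg_sumR => k; apply: cvgD; [exact: cvgMl_tmp | exact: cvgMl_tmp].
rewrite (cvg_lim (@Rhausdorff R) hRe) (cvg_lim (@Rhausdorff R) hIm).
apply/eqP; rewrite eq_complex.
rewrite Re_sum Im_sum.
by apply/andP; split; apply/eqP; apply: eq_bigr => k _; rewrite ?ReM_ ?ImM_.
Qed.


Definition S (N : nat) y : R[i] := \sum_(m < N) (-'i * y%:C) ^+ m / (m`!)%:R.

Lemma cvg_cos y : series (cos_coeff y) @ \oo --> cos y.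
Proof. rewrite unlock; exact: is_cvg_series_cos_coeff. Qed.
Lemma cvg_sin y : series (sin_coeff y) @ \oo --> sin y.
Proof. rewrite unlock; exact: is_cvg_series_sin_coeff. Qed.


Lemma S_eq N y : S N y = series (cos_coeff y) N +i* (- series (sin_coeff y) N).
Proof.
rewrite /S (eq_bigr _ (fun (m : 'I_N) _ => expterm y m)) /series /=.
apply/eqP; rewrite eq_complex Re_sum Im_sum /= sumrN.
by rewrite !big_mkord !eqxx.
Qed.

Lemma lim_S (I : finType) (c : I -> R[i]) (x : I -> R) :
  limn (fun N => complex.Re (\sum_k c k * S N (x k))) +i*
  limn (fun N => complex.Im (\sum_k c k * S N (x k)))
  = \sum_k c k * cis (- x k).
Proof.
have E : forall N, \sum_k c k * S N (x k) = \sum_k c k *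
   (series (cos_coeff (x k)) N +i* (- series (sin_coeff (x k)) N)).
  by move=> N; apply: eq_bigr => k _; rewrite S_eq.
have ER : (fun N => complex.Re (\sum_k c k * S N (x k))) =
  (fun N => complex.Re (\sum_k c k *
   (series (cos_coeff (x k)) N +i* (- series (sin_coeff (x k)) N)))).
  by apply/funext => N; rewrite E.
have EI : (fun N => complex.Im (\sum_k c k * S N (x k))) =
  (fun N => complex.Im (\sum_k c k *
   (series (cos_coeff (x k)) N +i* (- series (sin_coeff (x k)) N)))).
  by apply/funext => N; rewrite E.
rewrite ER EI.
rewrite (lim_cplx c (U := fun k => cos (x k)) (V := fun k => - sin (x k))).
- by apply: eq_bigr => k _; rewrite /cis cosN sinN.
- by move=> k; exact: cvg_cos.
- by move=> k; apply: cvgN; exact: cvg_sin.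
Qed.

End Lim.
Section Roots.
Variable R : realType.
Variable p : nat.
Hypothesis hp : prime p.

Let p0 : (0 < p)%N. Proof. exact: prime_gt0. Qed.
Let pR0 : (p%:R : R) != 0. Proof. by rewrite pnatr_eq0 -lt0n p0. Qed.

Definition theta : R := pi *+ 2 / p%:R.
Definition omega : R[i] := cis theta.

Lemma omegaX k : omega ^+ k = cis (theta *+ k).
Proof. exact: cisX. Qed.

Lemma omega_p : omega ^+ p = 1.
Proof.
rewrite omegaX /theta -[_ *+ p]mulr_natr divfK // /cis cos2pi sin2pi //.
Qed.

Lemma omega_neq0 : omega != 0.
Proof. by rewrite -normr_eq0 normcis oner_eq0. Qed.

Lemma omega_eq1 k : (omega ^+ k == 1) = (p %| k)%N.
Proof.
apply/idP/idP; last first.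
  by move/dvdnP=> [c ->]; rewrite mulnC exprM omega_p expr1n.
move/eqP; rewrite omegaX => /cis_eq1 [z hz].
have : (k%:R : R) = p%:R * z%:~R.
  move: hz; rewrite -[_ *+ k]mulr_natr /theta -mulrA => /(mulfI _).
  have pi2 : pi *+ 2 != 0 :> R.
    by rewrite lt0r_neq0 // pmulrn_rgt0 // pi_gt0.
  move=> /(_ pi2) /(congr1 (fun x => x * p%:R)).
  by rewrite mulrAC mulVf // mul1r mulrC.
rewrite -[k%:R]/(k%:Z%:~R) -[p%:R]/(p%:Z%:~R) -rmorphM /= => /intr_inj hk.
apply/dvdnP; exists `|z|%N.
lia.
Qed.


Lemma geom0 (z : R[i]) : z ^+ p = 1 -> z != 1 -> \sum_(k < p) z ^+ k = 0.
Proof.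
move=> zp z1; have := subrX1 z p; rewrite zp subrr => /esym/eqP.
by rewrite mulf_eq0 subr_eq0 (negbTE z1) /= => /eqP.
Qed.

Lemma omega_mod k : omega ^+ (k %% p)%N = omega ^+ k.
Proof. exact: (expr_mod _ omega_p). Qed.

Lemma orth (l j : 'I_p) :
  \sum_(k < p) omega ^+ (l * k) / omega ^+ (j * k) = (l == j)%:R * p%:R.
Proof.
set z := omega ^+ l / omega ^+ j.
have E : forall k : 'I_p, omega ^+ (l * k) / omega ^+ (j * k) = z ^+ k.
  by move=> k; rewrite /z exprMn exprVn -!exprM.
rewrite (eq_bigr _ (fun k _ => E k)).
have [e|ljn] := eqVneq l j.
  rewrite /z e divff ?expf_neq0 ?omega_neq0 //.
  by rewrite (eq_bigr _ (fun k _ => expr1n _ _)) sumr_const card_ord mul1r.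
rewrite mul0r; apply: geom0.
  by rewrite /z exprMn exprVn -!exprM !(mulnC _ p) !exprM omega_p !expr1n invr1 mulr1.
apply/negP => /eqP.
rewrite /z => /(canRL (divfK (expf_neq0 _ omega_neq0))); rewrite mul1r => h.
have : omega ^+ (l + (p - j)) == 1.
  by rewrite exprD h -exprD subnKC ?omega_p // ltnW.
rewrite omega_eq1 => /dvdnP [c hc].
have hl := ltn_ord l; have hj := ltn_ord j.
have : l <> j :> nat by move=> e; move: ljn; rewrite (val_inj e) eqxx.
move=> ne; case: c hc => [|[|c]] hc; rewrite ?mulSn in hc; lia.
Qed.


Lemma modA (l w : nat) : (l < p)%N -> (w < p)%N -> (((l + w) %% p + p - w) %% p = l)%N.
Proof.
move=> hl hw; rewrite -addnBA ?(ltnW hw) // modnDml -addnA subnKC ?(ltnW hw) //.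
by rewrite modnDr modn_small.
Qed.

Lemma modB (u w : nat) : (u < p)%N -> (w < p)%N -> (((u + p - w) %% p + w) %% p = u)%N.
Proof.
move=> hu hw; rewrite modnDml subnK; last by rewrite (leq_trans (ltnW hw)) // leq_addl.
by rewrite modnDr modn_small.
Qed.

Variable a : 'I_p -> R[i].

Definition lam (k : 'I_p) := \sum_(l < p) a l * omega ^+ (l * k).

Definition shiftw (w l : 'I_p) : 'I_p := Ordinal (ltn_pmod (l + w) p0).

Lemma circ_eig (w k : 'I_p) :
  \sum_(u < p) circ a w u * omega ^+ (u * k) = omega ^+ (w * k) * lam k.
Proof.
rewrite (reindex (shiftw w)); last first.
  exists (circ_idx w) => u _; apply: val_inj => /=.
    by rewrite modA.
  by rewrite modB.
rewrite /lam mulr_sumr; apply: eq_bigr => l _.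
have -> : circ a w (shiftw w l) = a l.
  rewrite /circ mxE; congr a; apply: val_inj => /=; by rewrite modA.
rewrite /= -omega_mod modnMml omega_mod mulnDl exprD.
by rewrite mulrA mulrC.
Qed.

Definition cf (w v k : 'I_p) : R[i] := omega ^+ (w * k) / omega ^+ (v * k) / p%:R.

Let pC0 : (p%:R : R[i]) != 0. Proof. by rewrite pnatr_eq0 -lt0n p0. Qed.

Lemma circ_pow m (w v : 'I_p) : (circ a ^+ m) w v = \sum_k cf w v k * lam k ^+ m.
Proof.
elim: m w v => [|m IH] w v.
  rewrite expr0 -idmxE mxE.
  under eq_bigr do rewrite expr0 mulr1.
  by rewrite /cf -mulr_suml orth mulfK.
rewrite exprS -mulmxE mxE.
under eq_bigr do rewrite IH mulr_sumr.
rewrite exchange_big; apply: eq_bigr => k _.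
rewrite /cf.
have -> : \sum_(u < p) circ a w u * (omega ^+ (u * k) / omega ^+ (v * k) / p%:R * lam k ^+ m)
  = (\sum_(u < p) circ a w u * omega ^+ (u * k)) * ((omega ^+ (v * k))^-1 / p%:R * lam k ^+ m).
  by rewrite mulr_suml; apply: eq_bigr => u _; ring.
rewrite circ_eig exprS; ring.
Qed.

Lemma expm_entry t N (w v : 'I_p) (x : 'I_p -> R) :
  (forall k, lam k = (x k)%:C) ->
  expm_partial (circ a) t N w v = \sum_k cf w v k * S N (t * x k).
Proof.
move=> hx; rewrite /expm_partial summxE.
under eq_bigr do rewrite mxE circ_pow mulr_sumr.
rewrite exchange_big; apply: eq_bigr => k _.
rewrite /S mulr_sumr; apply: eq_bigr => m _.
rewrite hx rmorphM /= !exprMn; ring.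
Qed.

Lemma U_entry t (w v : 'I_p) (x : 'I_p -> R) :
  (forall k, lam k = (x k)%:C) ->
  expm_iAt (circ a) t w v = \sum_k cf w v k * cis (- (t * x k)).
Proof.
move=> hx; rewrite /expm_iAt mxE.
have E := fun N => expm_entry t N w v hx.
have ER : (fun N => complex.Re (expm_partial (circ a) t N w v)) =
          (fun N => complex.Re (\sum_k cf w v k * S N (t * x k))).
  by apply/funext => N; rewrite E.
have EI : (fun N => complex.Im (expm_partial (circ a) t N w v)) =
          (fun N => complex.Im (\sum_k cf w v k * S N (t * x k))).
  by apply/funext => N; rewrite E.
rewrite ER EI; exact: (lim_S (cf w v) (fun k => t * x k)).
Qed.

Lemma conj_cis (y : R) : (cis y)^* = (cis y)^-1.
Proof.
have nz : cis y != 0 by rewrite -normr_eq0 normcis oner_eq0.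
apply: (mulfI nz); rewrite mulfV //.
rewrite /cis /=; apply/eqP; rewrite eq_complex /=.
by rewrite mulrN opprK -!expr2 cos2Dsin2 eqxx /= mulrN mulrC addNr eqxx.
Qed.

Lemma real_of_conj (z : R[i]) : z^* = z -> z = (complex.Re z)%:C.
Proof.
case: z => x y /= [] hy; congr Complex; lra.
Qed.

Definition z0 : 'I_p := Ordinal p0.

Lemma lam_real : hermitian_mx (circ a) -> forall k, lam k = (complex.Re (lam k))%:C.
Proof.
move=> herm k; apply: real_of_conj.
have ha : forall l, (a l)^* = a (circ_idx l z0).
  move=> l; have := herm z0 l; rewrite /circ !mxE => ->.
  congr ((a _)^*); apply: val_inj => /=; rewrite subn0 modnDr modn_small //.
have nlK : forall l, circ_idx (circ_idx l z0) z0 = l.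
  move=> l; apply: val_inj => /=; rewrite !add0n.
  have [->|lpos] := posnP l; first by rewrite subn0 modnn subn0 modnn.
  rewrite (modn_small (m := p - l)); last by rewrite ltn_subrL lpos p0.
  by rewrite subKn ?modn_small // ltnW.
rewrite /lam rmorph_sum /=.
rewrite (reindex (fun l => circ_idx l z0)); last by exists (fun l => circ_idx l z0) => l _; rewrite nlK.
apply: eq_bigr => l _.
rewrite rmorphM /= ha nlK; congr (_ * _).
rewrite omegaX conj_cis -omegaX.
have nzA : omega ^+ ((0 + p - l) %% p * k) != 0 by rewrite expf_neq0 ?omega_neq0.
have h : omega ^+ ((0 + p - l) %% p * k) * omega ^+ (l * k) = 1.
  rewrite -exprD -mulnDl -omega_mod -modnMml modnDml add0n subnK ?(ltnW (ltn_ord l)) //.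
  by rewrite modnn mul0n mod0n expr0.
by rewrite -[RHS](mulKf nzA) h mulr1.
Qed.

End Roots.
Section Cyclo.
Variable p : nat.
Hypothesis hp : prime p.

Definition Phi : {poly rat} := \poly_(i < p) 1.

Let p1 : (1 < p)%N. Proof. exact: prime_gt1. Qed.
Let p0 : (0 < p)%N. Proof. exact: prime_gt0. Qed.

Lemma size_Phi : size Phi = p.
Proof. by rewrite size_poly_eq ?oner_eq0. Qed.

Lemma Phi_horner (F : numFieldType) (z : F) :
  (map_poly (ratr : rat -> F) Phi).[z] = \sum_(i < p) z ^+ i.
Proof.
rewrite (horner_coef_wide (n := p)); last by rewrite size_map_poly size_Phi.
apply: eq_bigr => i _; rewrite coef_map coef_poly ltn_ord /=.
have -> : ratr (1 : rat) = 1 :> F by exact: (rmorph1 (ratr : {rmorphism rat -> F})).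
by rewrite mul1r.
Qed.

Lemma cyc_coef (F : numFieldType) (z : F) (q : {poly rat}) :
  z ^+ p = 1 -> z != 1 -> (size q <= p)%N ->
  root (map_poly (ratr : rat -> F) q) z -> q`_0 = q`_1.
Proof.
move=> zp z1 sq rq.
have [->|q0] := eqVneq q 0; first by rewrite !coef0.
have rPhi : root (map_poly (ratr : rat -> F) Phi) z.
  rewrite /root Phi_horner; apply/eqP.
  have := subrX1 z p; rewrite zp subrr => /esym/eqP.
  by rewrite mulf_eq0 subr_eq0 (negbTE z1) /= => /eqP.
set g := gcdp q Phi.
have g0 : g != 0 by rewrite gcdp_eq0 negb_and q0.
have rg : root (map_poly (ratr : rat -> F) g) z by rewrite gcdp_map root_gcd rq rPhi.
have sg : (1 < size g)%N.
  by rewrite -(size_map_poly (ratr : {rmorphism rat -> F})) (root_size_gt1 _ rg) // map_poly_eq0.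
have [w rw] : exists w, root (map_poly (ratr : rat -> algC) g) w.
  apply/closed_rootP; rewrite size_map_poly; by case: (size g) sg => [|[|]].
have rPw : root (map_poly (ratr : rat -> algC) Phi) w.
  apply: root_dvdp rw; rewrite dvdp_map; exact: dvdp_gcdr.
move: rPw; rewrite /root Phi_horner => /eqP sw.
have wp : w ^+ p = 1 by apply/eqP; rewrite -subr_eq0 subrX1 sw mulr0.
have w1 : w != 1.
  apply/negP => /eqP e; move: sw; rewrite e (eq_bigr _ (fun i _ => expr1n _ _)).
  rewrite sumr_const card_ord => /eqP; rewrite pnatr_eq0 => /eqP p00.
  by move: p0; rewrite p00.
have [m pm mp] := prim_order_exists p0 wp.
have mE : m = p.
  have [m1|m1] := eqVneq m 1%N.
    move: pm; rewrite m1 => /prim_expr_order; rewrite expr1 => e.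
    by move: w1; rewrite e eqxx.
  exact/(prime_nt_dvdP hp m1).
rewrite mE in pm.
have [pf [Dpf _] hpf] := minCpolyP w.
have pfg : pf %| g by rewrite -hpf.
have spf : size pf = p.
  rewrite -(size_map_poly (ratr : {rmorphism rat -> algC})) -Dpf.
  by rewrite (minCpoly_cyclotomic pm) size_cyclotomic totient_prime // prednK.
have sgp : size g = p.
  have h1 : (p <= size g)%N by rewrite -spf dvdp_leq.
  have h2 : (size g <= size q)%N by rewrite dvdp_leq // dvdp_gcdl.
  lia.
have gPhi : g %= Phi by rewrite -dvdp_size_eqp ?dvdp_gcdr // sgp size_Phi.
have : Phi %| q by rewrite -(eqp_dvdl _ gPhi) dvdp_gcdl.
case/dvdpP => d qd.
have d0 : d != 0 by apply: contra q0; rewrite qd => /eqP ->; rewrite mul0r.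
have sd : (size d <= 1)%N.
  move: sq; rewrite qd size_mul ?size_Phi //; last by rewrite -size_poly_eq0 size_Phi -lt0n.
  by case: (size d) => // n; rewrite addSn /= -{2}(add0n p) leq_add2r.
rewrite qd (size1_polyC sd) !coefCM /Phi !coef_poly p0 p1.
done.
Qed.

End Cyclo.
Theorem lemma4 (R : realType) (p : nat) (a : 'I_p -> R[i]) :
  prime p ->
  hermitian_mx (circ a) ->
  universal_pst (circ a) ->
  forall j : 'I_p, (0 < j)%N -> a j != 0.
Proof.
move=> hp herm upst j j0.
have p0 := prime_gt0 hp; have p1 := prime_gt1 hp.
have pC0 : (p%:R : R[i]) != 0 by rewrite pnatr_eq0 -lt0n p0.
have pR0 : (p%:R : R) != 0 by rewrite pnatr_eq0 -lt0n p0.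
set om := omega R p.
have om0 : om != 0 by rewrite -normr_eq0 /om /omega normcis oner_eq0.
have nom : forall n, `|om ^+ n| = 1 by move=> n; rewrite normrX /om /omega normcis expr1n.
set x := fun k => complex.Re (lam a k).
have hx : forall k, lam a k = (x k)%:C := lam_real hp herm.
set Z0 := z0 hp.
pose Z1 : 'I_p := Ordinal p1.
have [t [t0 ht]] := upst Z0 Z1.
rewrite (U_entry hp t Z1 Z0 hx) in ht.
set F := fun k => cf R Z1 Z0 k * cis (- (t * x k)) in ht.
have cfE : forall k : 'I_p, cf R Z1 Z0 k = om ^+ k / p%:R.
  by move=> k; rewrite /cf /= mul1n mul0n expr0 divr1.
have nF : forall k, `|F k| = p%:R^-1.
  by move=> k; rewrite /F cfE !normrM normfV nom normcis normr_nat mul1r mulr1.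
have hs : `|\sum_k F k| = \sum_k `|F k|.
  by rewrite ht (eq_bigr _ (fun k _ => nF k)) sumr_const card_ord -[_ *+ p]mulr_natr mulVf.
have [tau _ htau] := normC_sum_eq hs.
have Fk : forall k : 'I_p, om ^+ k * cis (- (t * x k)) = cis (- (t * x Z0)).
  move=> k; have e1 := htau k isT; have e2 := htau Z0 isT.
  rewrite nF in e2; rewrite nF -e2 /F !cfE in e1.
  move: e1; rewrite -!mulrA [_^-1 * _]mulrC [(p%:R^-1 * _)]mulrC !mulrA => /(mulIf (invr_neq0 pC0)).
  by rewrite /= expr0 mul1r.
have /choice [zf hz] : forall k : 'I_p, exists z : int,
    theta R p *+ k - t * x k + t * x Z0 = pi *+ 2 * z%:~R.
  move=> k; apply: cis_eq1.
  have -> : cis (theta R p *+ k - t * x k + t * x Z0) =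
     (om ^+ k * cis (- (t * x k))) * cis (t * x Z0).
    by rewrite /om omegaX -!cisD.
  by rewrite Fk -cisD addNr cis0.
apply/eqP => aj.
have orthE : forall l j1 : 'I_p,
    \sum_(k < p) om ^+ (l * k) / om ^+ (j1 * k) = (l == j1)%:R * p%:R := orth R hp.
have sum1 : \sum_(k < p) lam a k / om ^+ (j * k) = 0.
  transitivity (a j * p%:R); last by rewrite aj mul0r.
  rewrite /lam; under eq_bigr do rewrite mulr_suml.
  rewrite exchange_big /=.
  under eq_bigr do (under eq_bigr do rewrite -mulrA; rewrite -mulr_sumr orthE).
  rewrite (bigD1 j) //= eqxx mul1r big1 ?addr0 // => l /negbTE ->.
  by rewrite mul0r mulr0.
have sum0 : \sum_(k < p) 1 / om ^+ (j * k) = 0.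
  have := orthE Z0 j.
  rewrite (_ : (Z0 == j) = false) ?mul0r; last first.
    by apply/negbTE/eqP => e; move: j0; rewrite -e.
  by under eq_bigr do rewrite mul0n expr0.
have sumq : \sum_(k < p) (t * (x k - x Z0))%:C / om ^+ (j * k) = 0.
  have -> : \sum_(k < p) (t * (x k - x Z0))%:C / om ^+ (j * k) =
     t%:C * (\sum_(k < p) lam a k / om ^+ (j * k)) -
     (t * x Z0)%:C * (\sum_(k < p) 1 / om ^+ (j * k)).
    rewrite !mulr_sumr -sumrB; apply: eq_bigr => k _.
    by rewrite hx !rmorphM rmorphB /=; ring.
  by rewrite sum1 sum0 !mulr0 subr0.
set c := pi *+ 2 / p%:R : R.
have c0 : c != 0.
  by rewrite /c mulf_neq0 ?invr_neq0 // lt0r_neq0 // pmulrn_rgt0 // pi_gt0.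
have tE : forall k : 'I_p, t * (x k - x Z0) = c * ((k%:Z - p%:Z * zf k)%:~R : R).
  move=> k; have := hz k; rewrite -mulr_natr /theta -/c => e.
  have cp : c * p%:R = pi *+ 2 by rewrite /c divfK.
  rewrite rmorphB rmorphM /= [RHS]mulrBr [in RHS]mulrA.
  rewrite -!pmulrn cp -e; ring.
set zeta := (om ^+ j)^-1.
have sumz : \sum_(k < p) ((k%:Z - p%:Z * zf k)%:~R : R[i]) * zeta ^+ k = 0.
  have cC0 : c%:C != 0 by apply: contra c0 => /eqP [->].
  apply: (mulfI cC0).
  rewrite mulr0 -[RHS]sumq mulr_sumr; apply: eq_bigr => k _.
  rewrite tE (rmorphM (real_complex R) c) /= (rmorph_int (real_complex R)) /zeta exprVn -exprM; ring.
have zp : zeta ^+ p = 1.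
  by rewrite /zeta exprVn -exprM mulnC exprM /om (omega_p R hp) expr1n invr1.
have z1 : zeta != 1.
  rewrite /zeta invr_eq1 /om omega_eq1 //; apply/negP => /(dvdn_leq j0).
  by rewrite leqNgt ltn_ord.
pose qf (i : nat) : int := i%:Z - p%:Z * zf (insubd Z0 i).
pose Q : {poly rat} := \poly_(i < p) ((qf i)%:~R).
have sQ : (size Q <= p)%N by exact: size_poly.
have rQ : root (map_poly (ratr : rat -> R[i]) Q) zeta.
  rewrite /root (horner_coef_wide (n := p)); last by rewrite size_map_poly.
  rewrite -[X in _ == X]sumz; apply/eqP; apply: eq_bigr => k _.
  by rewrite coef_map coef_poly ltn_ord /= ratr_int /qf valKd.
have := cyc_coef hp zp z1 sQ rQ.
rewrite !coef_poly p0 p1 => /intr_inj; rewrite /qf.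
set u := zf _; set v := zf _ => e.
have hp2 : (2 <= p)%N := p1.
have e2 : (p%:Z * (v - u) = 1)%R by rewrite mulrBr; move: e; lia.
set d := v - u in e2.
have [dpos|dneg] := lerP 1 d.
  have : (p%:Z * 1 <= p%:Z * d)%R by rewrite ler_pM2l // ltz_nat.
  rewrite e2 mulr1; lia.
have : (p%:Z * d <= 0)%R by rewrite pmulr_rle0 ?ltz_nat // -ltzD1 ?add0r.
rewrite e2; lia.
Qed.
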